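(* Let $n\ge3$, $0<1/b_n\le 1/c_n$, and let $V=(v_{ij})$ be a symmetric $n\times n$ matrix in $\mathcal L_n(1/b_n,1/c_n)$. Let $r\in\{1,\dots,n-1\}$ and let $V_{22}$ be the bottom-right $(n-r)\times(n-r)$ block of $V$. Let $S=\mathrm{diag}(1/v_{11},\dots,1/v_{nn})$ and $S_{22}=\mathrm{diag}(1/v_{r+1,r+1},\dots,1/v_{nn})$. Then $V$ and $V_{22}$ are invertible and $$\max\{\|V^{-1}-S\|_{\max},\ \|V_{22}^{-1}-S_{22}\|_{\max}\}\le\frac{2b_n^2}{c_n(n-1)^2}\Big(\frac{nb_n}{2(n-2)c_n}+\frac12\Big).$$
   Context: For $m,M>0$, $\mathcal L_n(m,M)$ is the class of $n\times n$ matrices $V=(v_{ij})$ with $v_{ii}=\sum_{j\ne i}v_{ij}$ for $i=1,\dots,n$ and $m\le v_{ij}\le M$ for all $i\ne j$. For a matrix $J$, $\|J\|_{\max}=\max_{i,j}|J_{ij}|$. *)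

(* Defs.v *)
From mathcomp Require Import all_boot all_order all_algebra.
Set Implicit Arguments. Unset Strict Implicit. Unset Printing Implicit Defensive.
Import Order.TTheory GRing.Theory Num.Theory.
Local Open Scope ring_scope.

Definition mxmaxnorm (R : realFieldType) (p q : nat) (J : 'M[R]_(p, q)) : R :=
  \big[Num.max/0]_(i < p) \big[Num.max/0]_(j < q) `|J i j|.

Definition in_Lclass (R : realFieldType) (n : nat) (m M : R) (V : 'M[R]_n) : Prop :=
  (forall i : 'I_n, V i i = \sum_(j < n | j != i) V i j) /\
  (forall i j : 'I_n, i != j -> m <= V i j <= M).

Definition inv_diag (R : realFieldType) (n : nat) (V : 'M[R]_n) : 'M[R]_n :=
  diag_mx (\row_i (V i i)^-1).

(* Main.v *)
Require Import Defs.
From mathcomp Require Import all_boot all_order all_algebra.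
From mathcomp Require Import ring lra.
Import Order.TTheory GRing.Theory Num.Theory.
Set Implicit Arguments. Unset Strict Implicit. Unset Printing Implicit Defensive.
Local Open Scope ring_scope.

Lemma sum_neq (R : realFieldType) n (a : 'I_n) (F : 'I_n -> R) :
  \sum_(j < n | j != a) F j = \sum_j F j - F a.
Proof. rewrite [in RHS](bigD1 a) //=; ring. Qed.

Lemma sum_neq_const (R : realFieldType) n (a : 'I_n) (c : R) :
  \sum_(j < n | j != a) c = (n%:R - 1) * c.
Proof. by rewrite sum_neq sumr_const card_ord mulrBl mul1r mulr_natl. Qed.

Lemma ex_max (R : realFieldType) n (i0 : 'I_n) (h : 'I_n -> R) :
  exists a, forall j, h j <= h a.
Proof.
case: (@arg_maxP _ _ _ i0 predT h isT) => a _ Ha; exists a => j; exact: Ha.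
Qed.

Lemma ex_min (R : realFieldType) n (i0 : 'I_n) (h : 'I_n -> R) :
  exists a, forall j, h a <= h j.
Proof.
case: (@arg_minP _ _ _ i0 predT h isT) => a _ Ha; exists a => j; exact: Ha.
Qed.

Lemma dr_entry (R : Type) r m (A : 'M[R]_(r + m)) i j :
  drsubmx A i j = A (rshift r i) (rshift r j).
Proof. by rewrite drsubmxEsub mxE. Qed.

Lemma row_id (R : realFieldType) n (V : 'M[R]_n) (h : 'I_n -> R) i :
  (forall i j, V i j = V j i) ->
  (forall i, V i i = \sum_(j < n | j != i) V i j) ->
  \sum_j h j * V j i = \sum_(j < n | j != i) V i j * (h i + h j).
Proof.
move=> Vs Vd; rewrite (bigD1 i) //= Vd mulr_sumr -big_split /=.
apply: eq_bigr => j _; rewrite (Vs j i); ring.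
Qed.

Lemma core (R : realFieldType) n (V : 'M[R]_n) (m M g : R) (P : pred 'I_n)
  (h : 'I_n -> R) :
  (3 <= n)%N -> 0 < m -> 0 <= g ->
  (forall i j, V i j = V j i) ->
  (forall i, V i i = \sum_(j < n | j != i) V i j) ->
  (forall i j, i != j -> m <= V i j <= M) ->
  (forall i, ~~ P i -> h i = 0) ->
  (forall i, P i -> -g <= \sum_j h j * V j i <= 0) ->
  forall i, `|h i| <= g * (m + M) / (2 * m^+2 * (n%:R - 2)) + g / (2 * (n%:R - 1) * m).
Proof.
move=> n3 m0 g0 Vs Vd Vb hP hg i.
have Vb2 : forall a j, j != a -> m <= V a j <= M by move=> a j ja; apply: Vb; rewrite eq_sym.
set N : R := n%:R.
have N3 : 3 <= N by rewrite /N (ler_nat R 3 n).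
have mM : m <= M.
  have i0 : 'I_n by exact: (Ordinal (leq_trans (isT : (0 < 3)%N) n3)).
  have i1 : 'I_n by exact: (Ordinal (leq_trans (isT : (1 < 3)%N) n3)).
  pose j0 : 'I_n := Ordinal (leq_trans (isT : (0 < 3)%N) n3).
  pose j1 : 'I_n := Ordinal (leq_trans (isT : (1 < 3)%N) n3).
  have : j1 != j0 by [].
  move=> /(Vb2 j0 j1) /andP[]; lra.
have Wlo : forall a, (N - 1) * m <= V a a.
  move=> a; rewrite Vd -(sum_neq_const a); apply: ler_sum => j ja.
  by case/andP: (Vb2 a j ja).
have Whi : forall a, V a a <= (N - 1) * M.
  move=> a; rewrite Vd -(sum_neq_const a); apply: ler_sum => j ja.
  by case/andP: (Vb2 a j ja).
have Vpos : forall a j, j != a -> 0 <= V a j.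
  move=> a j ja; case/andP: (Vb2 a j ja) => H _; lra.
have Wpos : forall a, 0 < V a a.
  move=> a; have := Wlo a; have : 0 < (N - 1) * m by apply: mulr_gt0 => //; lra.
  lra.
set K := g * (m + M) / (2 * m^+2 * (N - 2)) + g / (2 * (N - 1) * m).
have K0 : 0 <= K.
  rewrite /K; apply: addr_ge0; apply: divr_ge0 => //.
  - apply: mulr_ge0 => //; lra.
  - apply: mulr_ge0; [apply: mulr_ge0 => //; rewrite exprn_ge0 //; lra | lra].
  - apply: mulr_ge0; lra.
have K1 : g / ((N - 1) * m) <= K.
  have N1 : N - 1 != 0 by apply/eqP; lra.
  have N2 : N - 2 != 0 by apply/eqP; lra.
  have mn : m != 0 by apply/eqP; lra.
  have -> : K = g / ((N - 1) * m) + g * (m + M * (N - 1)) / (2 * m ^+ 2 * (N - 2) * (N - 1)).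
    by rewrite /K; field; rewrite ?N1 ?N2 ?mn.
  rewrite lerDl; apply: divr_ge0.
  - apply: mulr_ge0 => //; have : 0 <= M * (N - 1) by apply: mulr_ge0; lra.
    lra.
  - apply: mulr_ge0; [apply: mulr_ge0; [apply: mulr_ge0 => //; rewrite exprn_ge0 //; lra|lra]|lra].
have i0 : 'I_n by exact: (Ordinal (leq_trans (isT : (0 < 3)%N) n3)).
have [a Ha] := ex_max i0 h.
have [b Hb] := ex_min i0 h.
have rowa : P a -> -g <= \sum_(j < n | j != a) V a j * (h a + h j) <= 0.
  by move=> Pa; rewrite -row_id //; apply: hg.
have rowb : P b -> -g <= \sum_(j < n | j != b) V b j * (h b + h j) <= 0.
  by move=> Pb; rewrite -row_id //; apply: hg.
have lowa : forall c, (forall j, c <= h j) -> (h a + c) * V a a <= \sum_(j < n | j != a) V a j * (h a + h j).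
  move=> c Hc; rewrite Vd mulr_sumr; apply: ler_sum => j ja.
  rewrite mulrC; apply: ler_wpM2l; first exact: Vpos.
  by rewrite lerD2l.
have upb : forall c, (forall j, h j <= c) -> \sum_(j < n | j != b) V b j * (h b + h j) <= (h b + c) * V b b.
  move=> c Hc; rewrite Vd mulr_sumr; apply: ler_sum => j jb.
  rewrite [X in _ <= X]mulrC; apply: ler_wpM2l; first exact: Vpos.
  by rewrite lerD2l.
case Pb: (P b); last first.
  have hb0 : h b = 0 by apply: hP; rewrite Pb.
  have ha0 : h a <= 0.
    case Pa: (P a); last by rewrite hP ?Pa.
    have := lowa (h b) Hb; have := rowa Pa; rewrite hb0.
    move=> /andP[_ H1] H2.
    have H3 : h a * V a a <= 0 by lra.
    by rewrite pmulr_lle0 in H3.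
  have hi0 : h i = 0 by have := Ha i; have := Hb i; lra.
  by rewrite hi0 normr0.
case Pa: (P a); last first.
  have ha0 : h a = 0 by apply: hP; rewrite Pa.
  have := upb (h a) Ha; have := rowb Pb; rewrite ha0 addr0 => /andP[H1 _] H2.
  have H3 : - h b * ((N - 1) * m) <= g.
    have : - h b * ((N - 1) * m) <= - h b * V b b.
      apply: ler_wpM2l; last exact: Wlo.
      have := Hb a; lra.
    lra.
  have H4 : - h b <= g / ((N - 1) * m).
    rewrite ler_pdivlMr //; apply: mulr_gt0 => //; lra.
  rewrite ler_norml; apply/andP; split; have := Ha i; have := Hb i; lra.
have sa := lowa (h b) Hb.
have sb : \sum_(j < n | j != b) V b j * (h b + h j) <= (h a + h b) * V b b.
  by rewrite (addrC (h a)); apply: upb.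
move: (rowa Pa) (rowb Pb) sa sb.
set ga := \sum_(j < n | j != a) _.
set gb := \sum_(j < n | j != b) _.
move=> /andP[ga1 ga2] /andP[gb1 gb2] sa sb.
have ea : m * \sum_(j < n | j != a) (h j - h b) <= ga - (h a + h b) * V a a.
  rewrite /ga (Vd a) mulr_sumr mulr_sumr -sumrB; apply: ler_sum => j ja.
  have -> : V a j * (h a + h j) - (h a + h b) * V a j = V a j * (h j - h b) by ring.
  apply: ler_wpM2r; first by have := Hb j; lra.
  by case/andP: (Vb2 a j ja).
have eb : m * \sum_(j < n | j != b) (h a - h j) <= (h a + h b) * V b b - gb.
  rewrite /gb (Vd b) mulr_sumr mulr_sumr -sumrB; apply: ler_sum => j jb.
  have -> : (h a + h b) * V b j - V b j * (h b + h j) = V b j * (h a - h j) by ring.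
  apply: ler_wpM2r; first by have := Ha j; lra.
  by case/andP: (Vb2 b j jb).
have e3 : \sum_(j < n | j != a) (h j - h b) + \sum_(j < n | j != b) (h a - h j)
    = (N - 2) * (h a - h b).
  rewrite !sum_neq.
  have E : \sum_j (h j - h b) + \sum_j (h a - h j) = N * (h a - h b).
    rewrite -big_split /= (eq_bigr (fun _ => h a - h b)); last by move=> j _; ring.
    by rewrite sumr_const card_ord mulr_natl.
  lra.
have s0 : h a + h b <= 0.
  have H : (h a + h b) * V a a <= 0 by lra.
  by rewrite pmulr_lle0 in H.
have sbb : (h a + h b) * V b b <= 0 by rewrite pmulr_lle0.
have key : m * ((N - 2) * (h a - h b)) <= g - (h a + h b) * V a a.
  rewrite -e3 mulrDr; lra.
have Ht : - (h a + h b) * ((N - 1) * m) <= g.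
  have : - (h a + h b) * ((N - 1) * m) <= - (h a + h b) * V b b.
    by apply: ler_wpM2l; [lra | exact: Wlo].
  lra.
have Hta : - (h a + h b) * V a a <= - (h a + h b) * ((N - 1) * M).
  by apply: ler_wpM2l; [lra | exact: Whi].
have Hd : (h a - h b) * (m ^+ 2 * (N - 2)) <= g * (m + M).
  have H1 : m * (m * ((N - 2) * (h a - h b))) <= m * (g + - (h a + h b) * ((N - 1) * M)).
    by apply: ler_wpM2l; [lra | lra].
  have H2 : - (h a + h b) * ((N - 1) * m) * M <= g * M.
    by apply: ler_wpM2r => //; lra.
  have -> : (h a - h b) * (m ^+ 2 * (N - 2)) = m * (m * ((N - 2) * (h a - h b))) by ring.
  have -> : g * (m + M) = m * g + g * M by ring.
  have E1 : m * (g + - (h a + h b) * ((N - 1) * M)) = m * g + - (h a + h b) * ((N - 1) * m) * M by ring.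
  rewrite E1 in H1.
  lra.
have Hd' : (h a - h b) / 2 <= g * (m + M) / (2 * m ^+ 2 * (N - 2)).
  have P2 : 0 < 2 * m ^+ 2 * (N - 2).
    apply: mulr_gt0; [apply: mulr_gt0 => //; exact: exprn_gt0 | lra].
  rewrite ler_pdivlMr //.
  have -> : (h a - h b) / 2 * (2 * m ^+ 2 * (N - 2)) = (h a - h b) * (m ^+ 2 * (N - 2)).
    by field.
  exact: Hd.
have Ht' : - (h a + h b) / 2 <= g / (2 * (N - 1) * m).
  have P2 : 0 < 2 * (N - 1) * m.
    apply: mulr_gt0 => //; lra.
  rewrite ler_pdivlMr //.
  have -> : - (h a + h b) / 2 * (2 * (N - 1) * m) = - (h a + h b) * ((N - 1) * m).
    by field.
  exact: Ht.
rewrite ler_norml /K; apply/andP; split; have := Ha i; have := Hb i; lra.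
Qed.

Definition lft (R : Type) {r m : nat} (z : R) (x : 'I_m -> R) (i : 'I_(r+m)) : R :=
  if split i is inr j then x j else z.
Lemma lft_l (R : Type) r m z (x : 'I_m -> R) i : lft (r:=r) z x (lshift m i) = z.
Proof. by rewrite /lft (unsplitK (inl _ i)). Qed.
Lemma lft_r (R : Type) r m z (x : 'I_m -> R) i : lft (r:=r) z x (rshift r i) = x i.
Proof. by rewrite /lft (unsplitK (inr _ i)). Qed.

Lemma lft_sum (R : realFieldType) r m (x : 'I_m -> R) (V : 'M[R]_(r + m)) j :
  \sum_i lft 0 x i * V i (rshift r j) = \sum_i x i * drsubmx V i j.
Proof.
rewrite big_split_ord /= big1 ?add0r; last by move=> i _; rewrite lft_l mul0r.
by apply: eq_bigr => i _; rewrite lft_r dr_entry.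
Qed.

Lemma row_eq (R : realFieldType) p (A : 'M[R]_p) k i : A \in unitmx ->
  \sum_j (A k k * (invmx A - diag_mx (\row_l (A l l)^-1)) k j) * A j i
  = A k k * (k == i)%:R - A k k * (A k k)^-1 * A k i.
Proof.
move=> Au.
have -> : \sum_j (A k k * (invmx A - diag_mx (\row_l (A l l)^-1)) k j) * A j i
   = A k k * ((invmx A - diag_mx (\row_l (A l l)^-1)) *m A) k i.
  by rewrite mxE mulr_sumr; apply: eq_bigr => j _; rewrite mulrA.
by rewrite mulmxBl mulVmx // mul_diag_mx !mxE mulrBr mulrA.
Qed.

Lemma mxmaxnorm_le (R : realFieldType) p q (J : 'M[R]_(p, q)) T :
  0 <= T -> (forall i j, `|J i j| <= T) -> mxmaxnorm J <= T.
Proof.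
move=> T0 HJ; rewrite /mxmaxnorm; elim/big_ind: _ => //.
  by move=> x y Hx Hy; rewrite ge_max Hx Hy.
move=> i _; elim/big_ind: _ => //.
  by move=> x y Hx Hy; rewrite ge_max Hx Hy.
Qed.

Lemma final_arith (R : realFieldType) (b c N : R) : 0 < c -> c <= b -> 3 <= N ->
  (1/c * (1/b + 1/c) / (2 * (1/b) ^+ 2 * (N - 2)) + 1/c / (2 * (N - 1) * (1/b)))
     / ((N - 1) * (1/b))
  <= 2 * b ^+ 2 / (c * (N - 1) ^+ 2) * (N * b / (2 * (N - 2) * c) + 1 / 2).
Proof.
move=> c0 cb N3.
have b0 : 0 < b by lra.
have bn : b != 0 by apply/eqP; lra.
have cn : c != 0 by apply/eqP; lra.
have N1 : N - 1 != 0 by apply/eqP; lra.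
have N2 : N - 2 != 0 by apply/eqP; lra.
rewrite -subr_ge0.
have -> : 2 * b ^+ 2 / (c * (N - 1) ^+ 2) * (N * b / (2 * (N - 2) * c) + 1 / 2) -
  (1/c * (1/b + 1/c) / (2 * (1/b) ^+ 2 * (N - 2)) + 1/c / (2 * (N - 1) * (1/b)))
     / ((N - 1) * (1/b))
  = b ^+ 2 * ((N + 1) * b - c) / (2 * c ^+ 2 * (N - 1) ^+ 2 * (N - 2)).
  by field; rewrite ?bn ?cn ?N1 ?N2.
apply: divr_ge0.
  apply: mulr_ge0; first exact: sqr_ge0.
  have : 0 <= N * b by apply: mulr_ge0; lra.
  lra.
apply: mulr_ge0; last lra.
apply: mulr_ge0; [apply: mulr_ge0 => //; exact: sqr_ge0 | exact: sqr_ge0].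
Qed.

Lemma lft_lo (R : Type) r m z (x : 'I_m -> R) (i : 'I_(r + m)) :
  (i < r)%N -> lft z x i = z.
Proof.
rewrite /lft; case: splitP => [j _ | j eij] //=.
Qed.

Lemma hi_ex r m (i : 'I_(r + m)) : (r <= i)%N -> exists j, i = rshift r j.
Proof.
case: (splitP i) => [j eij | j eij].
  by rewrite eij leqNgt ltn_ord.
by move=> _; exists j; apply: val_inj.
Qed.

Lemma diag_lo (R : realFieldType) n (V : 'M[R]_n) (m M : R) a :
  (forall i, V i i = \sum_(j < n | j != i) V i j) ->
  (forall i j, i != j -> m <= V i j <= M) ->
  (n%:R - 1) * m <= V a a.
Proof.
move=> Vd Vb; rewrite Vd -(sum_neq_const a); apply: ler_sum => j ja.
have : a != j by rewrite eq_sym.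
by move/Vb => /andP[].
Qed.

Lemma div_fin (R : realFieldType) (A f K L : R) :
  0 < L -> L <= A -> `|A * f| <= K -> `|f| <= K / L.
Proof.
move=> L0 LA H; rewrite ler_pdivlMr // mulrC.
apply: le_trans H; rewrite normrM (ger0_norm (le_trans (ltW L0) LA)).
by apply: ler_wpM2r => //.
Qed.

Theorem lemma2 (R : realFieldType) (r m : nat) (b c : R)
  (hn : (3 <= r + m)%N) (hr : (1 <= r)%N) (hm : (1 <= m)%N)
  (hb : 0 < 1 / b) (hbc : 1 / b <= 1 / c)
  (V : 'M[R]_(r + m)) (hsym : V^T = V) (hV : in_Lclass (1 / b) (1 / c) V) :
  let n : R := (r + m)%:R in
  let V22 : 'M[R]_m := drsubmx V in
  [/\ V \in unitmx, V22 \in unitmx &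
      Num.max (mxmaxnorm (invmx V - inv_diag V))
              (mxmaxnorm (invmx V22 - inv_diag V22))
      <= 2 * b ^+ 2 / (c * (n - 1) ^+ 2)
         * (n * b / (2 * (n - 2) * c) + 1 / 2)].
Proof.
move=> n V22.
have b0 : 0 < b by move: hb; rewrite div1r invr_gt0.
have c0 : 0 < c.
  have : 0 < 1 / c by lra.
  by rewrite div1r invr_gt0.
have cb : c <= b.
  by move: hbc; rewrite !div1r lef_pV2 // posrE.
case: hV => Vd Vb.
have Vs : forall i j, V i j = V j i.
  by move=> i j; rewrite -[in LHS]hsym mxE.
have mm0 : 0 < 1 / b by [].
have MM0 : 0 <= 1 / c by lra.
have N3 : 3 <= n by rewrite /n (ler_nat R 3).
have Lpos : 0 < (n - 1) * (1 / b) by apply: mulr_gt0 => //; lra.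
have Vu : V \in unitmx.
  rewrite unitmxE unitfE; apply/negP => /det0P [v vn0 hv].
  move/negP: vn0; apply; apply/eqP/rowP => j; rewrite mxE.
  have hg : forall i, predT i -> - 0 <= \sum_j v 0 j * V j i <= 0.
    move=> i _; have -> : \sum_j v 0 j * V j i = (v *m V) 0 i by rewrite mxE.
    by rewrite hv mxE oppr0 lexx.
  have hP : forall i : 'I_(r + m), ~~ predT i -> v 0 i = 0 by [].
  have := @core R (r + m) V (1 / b) (1 / c) 0 predT (fun j => v 0 j) hn mm0 (lexx 0)
    Vs Vd Vb hP hg j.
  by rewrite !mul0r add0r normr_le0 => /eqP.
have V22u : V22 \in unitmx.
  rewrite unitmxE unitfE; apply/negP => /det0P [v vn0 hv].
  move/negP: vn0; apply; apply/eqP/rowP => j; rewrite mxE.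
  pose P : pred 'I_(r + m) := fun i => (r <= i)%N.
  have hg : forall i, P i -> - 0 <= \sum_j lft 0 (fun j => v 0 j) j * V j i <= 0.
    move=> i /hi_ex [k ->]; rewrite lft_sum.
    have -> : \sum_j v 0 j * drsubmx V j k = (v *m V22) 0 k by rewrite mxE.
    by rewrite hv mxE oppr0 lexx.
  have hP : forall i : 'I_(r + m), ~~ P i -> lft 0 (fun j => v 0 j) i = 0.
    by move=> i; rewrite /P -ltnNge; apply: lft_lo.
  have := @core R (r + m) V (1 / b) (1 / c) 0 P _ hn mm0 (lexx 0)
    Vs Vd Vb hP hg (rshift r j).
  by rewrite lft_r !mul0r add0r normr_le0 => /eqP.
set T := 2 * b ^+ 2 / (c * (n - 1) ^+ 2) * (n * b / (2 * (n - 2) * c) + 1 / 2).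
set K := 1 / c * (1 / b + 1 / c) / (2 * (1 / b) ^+ 2 * (n - 2)) + 1 / c / (2 * (n - 1) * (1 / b)).
have KT : K / ((n - 1) * (1 / b)) <= T by apply: final_arith.
have T0 : 0 <= T.
  apply: le_trans KT; apply: divr_ge0; last exact: ltW.
  rewrite /K; apply: addr_ge0; apply: divr_ge0 => //.
  - apply: mulr_ge0 => //; lra.
  - apply: mulr_ge0; [apply: mulr_ge0 => //; exact: sqr_ge0 | lra].
  - apply: mulr_ge0; [apply: mulr_ge0 => //; lra | lra].
split => //.
rewrite ge_max; apply/andP; split; apply: mxmaxnorm_le => // k i.
- have Vkk : V k k != 0 by apply/eqP => H; have := diag_lo k Vd Vb; rewrite H; lra.
  have hg : forall i, predT i -> - (1 / c) <=
      \sum_j (V k k * (invmx V - inv_diag V) k j) * V j i <= 0.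
    move=> l _; rewrite row_eq // mulfV // mul1r.
    case: (eqVneq k l) => [<-|kl]; first by rewrite /= mulr1; lra.
    rewrite /= mulr0 sub0r; case/andP: (Vb k l kl) => H1 H2; lra.
  have hP : forall i : 'I_(r + m), ~~ predT i -> V k k * (invmx V - inv_diag V) k i = 0 by [].
  have := @core R (r + m) V (1 / b) (1 / c) (1 / c) predT _ hn mm0 MM0
    Vs Vd Vb hP hg i.
  move/(div_fin Lpos (diag_lo k Vd Vb)) => H; exact: le_trans H KT.
- have Vkk' : (n - 1) * (1 / b) <= V22 k k by rewrite /V22 dr_entry; exact: diag_lo Vd Vb.
  have Vkk : V22 k k != 0 by apply/eqP => H; move: Vkk'; rewrite H; lra.
  pose P : pred 'I_(r + m) := fun i => (r <= i)%N.
  pose h := lft (r:=r) 0 (fun j => V22 k k * (invmx V22 - inv_diag V22) k j).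
  have hg : forall i, P i -> - (1 / c) <= \sum_j h j * V j i <= 0.
    move=> l /hi_ex [j ->]; rewrite lft_sum -/V22 row_eq // mulfV // mul1r.
    case: (eqVneq k j) => [<-|kl]; first by rewrite /= mulr1; lra.
    have kl' : rshift r k != rshift r j by rewrite (inj_eq (@rshift_inj _ _)).
    rewrite /= mulr0 sub0r /V22 dr_entry; case/andP: (Vb _ _ kl') => H1 H2; lra.
  have hP : forall i : 'I_(r + m), ~~ P i -> h i = 0.
    by move=> l; rewrite /P -ltnNge; apply: lft_lo.
  have := @core R (r + m) V (1 / b) (1 / c) (1 / c) P h hn mm0 MM0
    Vs Vd Vb hP hg (rshift r i).
  rewrite /h lft_r.
  move/(div_fin Lpos Vkk') => H; exact: le_trans H KT.
Qed.
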